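(* A Boolean set $p\colon X\to B$ has binary meets (i.e. $x\wedge y$ exists in $(X,\le)$ for all $x,y$) if and only if the total space $X^{\ast}$ of its dual étalé space $\widetilde p\colon X^{\ast}\to B^{\ast}$ is Hausdorff.
   Context: Convention: a ''Boolean algebra'' means a generalized Boolean algebra (relatively complemented distributive lattice with $0$). Boolean set: a presheaf of sets $p\colon X\to B$ over a Boolean algebra $B$ (pairwise disjoint $X_e$, restriction maps $x\mapsto x|^e_f$ for $e\ge f$ with $|^e_e=\mathrm{id}$, $(x|^e_f)|^f_g=x|^e_g$) with all $X_e\ne\emptyset$, such that under the order $x\le y$ iff $p(x)\le p(y)$ and $x=y|^{p(y)}_{p(x)}$ there is a least element $0$, compatible pairs ($x\wedge y$ exists and $p(x\wedge y)=p(x)\wedge p(y)$) have joins, and $p(x)=0\Rightarrow x=0$. Dual étalé space: $X^{\ast}$ is the set of ultrafilters (maximal proper non-empty down-directed upward-closed subsets) of $(X,\le)$ with topology generated by $L(a)=\{G\in X^{\ast}: a\in G\}$, $a\in X$; $B^{\ast}$ the set of ultrafilters of $B$ with basis $M(b)=\{F: b\in F\}$; $\widetilde p(G)=p(G)$. *)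

(* Defs.v *)
(* the Boolean algebra B is a cbDistrLatticeType
   (sectionally complemented distributive lattice with bottom = generalized
   Boolean algebra). Sets are Prop-valued predicates. *)
From HB Require Import structures.
From mathcomp Require Import all_boot all_order.
Set Implicit Arguments. Unset Strict Implicit. Unset Printing Implicit Defensive.
Import Order.TTheory.
Local Open Scope order_scope.

Section BooleanSets.
Context {d : Order.disp_t} {B : cbDistrLatticeType d} {X : Type}.
(* A presheaf of sets over B is given by its total space X, the projection
   p : X -> B (so X_e := p^-1(e), automatically pairwise disjoint) and the
   restriction maps res x f = x|^{p x}_f, meaningful for f <= p x. *)
Variables (p : X -> B) (res : X -> B -> X).

Definition leX (x y : X) : Prop := p x <= p y /\ x = res y (p x).

Definition is_lbX (x y m : X) : Prop := leX m x /\ leX m y.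
Definition is_meetX (x y m : X) : Prop :=
  is_lbX x y m /\ forall z, is_lbX x y z -> leX z m.
Definition is_joinX (x y j : X) : Prop :=
  leX x j /\ leX y j /\ forall z, leX x z -> leX y z -> leX j z.

Definition compatibleX (x y : X) : Prop :=
  exists m, is_meetX x y m /\ p m = p x `&` p y.

Definition is_leastX (z : X) : Prop := forall y, leX z y.

Definition boolean_set : Prop :=
  (forall x f, f <= p x -> p (res x f) = f) /\
  (forall x, res x (p x) = x) /\
  (forall x f g, g <= f -> f <= p x -> res (res x f) g = res x g) /\
  (forall e : B, exists x, p x = e) /\
  (exists z0, is_leastX z0 /\
     (forall x y, compatibleX x y -> exists j, is_joinX x y j) /\
     (forall x, p x = \bot -> x = z0)).

Definition has_binary_meets : Prop := forall x y, exists m, is_meetX x y m.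

Definition is_filterX (F : X -> Prop) : Prop :=
  (exists x, F x) /\ (exists x, ~ F x) /\
  (forall a b, F a -> F b -> exists c, F c /\ leX c a /\ leX c b) /\
  (forall a b, F a -> leX a b -> F b).

Definition ultrafilterX (F : X -> Prop) : Prop :=
  is_filterX F /\
  forall G, is_filterX G -> (forall x, F x -> G x) -> forall x, G x -> F x.

(* The topology on X^* (the set of ultrafilters) generated by the sets
   L(a) = {G : a \in G}: the smallest family of subsets of X^* containing
   X^* and all L(a), closed under binary intersections and arbitrary unions
   (and extensional equality). Subsets of X^* are predicates on X -> Prop
   implying ultrafilterX. *)
Inductive dual_open : ((X -> Prop) -> Prop) -> Prop :=
| do_basic (a : X) : dual_open (fun G => ultrafilterX G /\ G a)
| do_top : dual_open ultrafilterX
| do_inter U V : dual_open U -> dual_open V -> dual_open (fun G => U G /\ V G)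
| do_union (I : Type) (U : I -> (X -> Prop) -> Prop) :
    (forall i, dual_open (U i)) -> dual_open (fun G => exists i, U i G)
| do_ext U V : dual_open U -> (forall G, U G <-> V G) -> dual_open V.

(* points of X^* are ultrafilters, compared as subsets of X (extensionally) *)
Definition dual_hausdorff : Prop :=
  forall G H, ultrafilterX G -> ultrafilterX H -> ~ (forall x, G x <-> H x) ->
  exists U V, dual_open U /\ dual_open V /\ U G /\ V H /\
              forall K, ~ (U K /\ V K).

End BooleanSets.

(* Main.v *)
Require Import Defs.
From HB Require Import structures.
From mathcomp Require Import all_boot all_order.
From mathcomp Require Import boolp classical_sets.
Set Implicit Arguments. Unset Strict Implicit. Unset Printing Implicit Defensive.
Import Order.Theory.
Local Open Scope order_scope.


Lemma zornP (T:Type) (P : (T -> Prop) -> Prop) :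
  (forall F : (T->Prop)->Prop, (forall A, F A -> P A) ->
     (forall A B, F A -> F B -> (forall x, A x -> B x) \/ (forall x, B x -> A x)) ->
     P (fun x => exists A, F A /\ A x)) ->
  exists A, P A /\ forall B, P B -> (forall x, A x -> B x) -> forall x, B x -> A x.
Proof.
move=> H.
have [A [PA Amax]] : exists A, P A /\ forall B, (A `<` B)%classic -> ~ P B.
  apply: Zorn_bigcup => F FP Ftot.
  have -> : (\bigcup_(X in F) X)%classic = (fun x => exists A, F A /\ A x).
    by apply: funext => x; apply: propext; split=> [[A FA Ax]|[A [FA Ax]]]; exists A.
  apply: H; first exact: FP.
  move=> A0 B0 FA FB; have [h|h] := Ftot A0 B0 FA FB.
  by left=> x; apply: h.
  by right=> x; apply: h.
exists A; split => // B PB AB x Bx.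
apply: contrapT => nAx; apply: (Amax B) => //; split => // BA.
exact: nAx (BA x Bx).
Qed.

Section BS.
Variables (d : Order.disp_t) (B : cbDistrLatticeType d) (X : Type).
Variables (p : X -> B) (res : X -> B -> X).
Hypothesis Hpr : forall x f, f <= p x -> p (res x f) = f.
Hypothesis Hid : forall x, res x (p x) = x.
Hypothesis Hcomp : forall x f g, g <= f -> f <= p x -> res (res x f) g = res x g.
Hypothesis Hfib : forall e : B, exists x, p x = e.
Variable z0 : X.
Hypothesis Hz0 : is_leastX p res z0.
Hypothesis Hjoin : forall x y, compatibleX p res x y -> exists j, is_joinX p res x y j.
Hypothesis Hzero : forall x, p x = \bot -> x = z0.

Local Notation le := (leX p res).
Local Notation uf := (ultrafilterX p res).

Lemma le_refl x : le x x.
Proof. by split; rewrite ?Hid. Qed.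

Lemma le_p x y : le x y -> p x <= p y.
Proof. by case. Qed.

Lemma le_trans x y z : le x y -> le y z -> le x z.
Proof.
move=> [pxy ex] [pyz ey]; split; first exact: Order.POrderTheory.le_trans pxy pyz.
by rewrite {1}ex {1}ey Hcomp.
Qed.

Lemma res_le x f : f <= p x -> le (res x f) x.
Proof. by move=> h; split; rewrite Hpr. Qed.

Lemma res_mono x f g : g <= f -> f <= p x -> le (res x g) (res x f).
Proof.
move=> gf fx; have gx : g <= p x by exact: Order.POrderTheory.le_trans gf fx.
split; first by rewrite !Hpr.
by rewrite (Hpr gx) Hcomp.
Qed.

Lemma le_res z x f : le z x -> p z <= f -> f <= p x -> le z (res x f).
Proof.
move=> [zx ez] zf fx; split; first by rewrite Hpr.
by rewrite Hcomp // ?Hpr //; apply: ez.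
Qed.

Lemma le_common c m y : le c y -> le m y -> p c <= p m -> le c m.
Proof.
move=> [cy ec] [my em] cm; split => //.
by rewrite {1}ec {1}em Hcomp.
Qed.

Lemma pz0 : p z0 = \bot.
Proof.
have [w pw] := Hfib \bot; have := le_p (Hz0 w); rewrite pw lex0.
by move/eqP.
Qed.

Lemma filter_noz0 F : is_filterX p res F -> ~ F z0.
Proof.
move=> [_ [[x nx] [_ up]]] Fz; apply: nx; exact: up _ _ Fz (Hz0 x).
Qed.

Lemma p_le0 z : p z <= \bot -> z = z0.
Proof. by rewrite lex0 => /eqP; apply: Hzero. Qed.

Lemma disj_bot (a f g : B) : a <= f -> a <= g `\` f -> a <= \bot.
Proof.
move=> af; rewrite leBRL => /andP[_ /eqP].
by rewrite (meet_l af) => ->.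
Qed.


Lemma uf_dir F a b : uf F -> F a -> F b -> exists c, F c /\ le c a /\ le c b.
Proof. by move=> [[_ [_ [h _]]] _]; apply: h. Qed.

Lemma uf_up F a b : uf F -> F a -> le a b -> F b.
Proof. by move=> [[_ [_ [_ h]]] _]; apply: h. Qed.

Lemma uf_ne F : uf F -> exists a, F a.
Proof. by move=> [[h _] _]. Qed.

Lemma uf_noz0 F : uf F -> ~ F z0.
Proof. by move=> [h _]; apply: filter_noz0. Qed.

Lemma uf_bot F a : uf F -> F a -> p a <= \bot -> False.
Proof. by move=> uF Fa /p_le0 e; apply: (uf_noz0 uF); rewrite -e. Qed.

Lemma rem_dir (w1 c : X) (e : B) : le c w1 ->
  le (res c (p c `\` e)) (res w1 (p w1 `\` e)).
Proof.
move=> cw; have [pc ec] := cw.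
have h1 : p c `\` e <= p c by apply: leBx.
rewrite {1}ec Hcomp //; apply: res_mono; last by apply: leBx.
by apply: leBl.
Qed.

Lemma ultra_split U e : uf U -> (forall w, U w -> ~ p w <= e) ->
  forall w, U w -> U (res w (p w `\` e)).
Proof.
move=> uU nw w0 Uw0.
pose G := fun y => exists w, U w /\ le (res w (p w `\` e)) y.
have UG : forall x, U x -> G x.
  by move=> x Ux; exists x; split=> //; apply: res_le; apply: leBx.
have fG : is_filterX p res G.
  split; first by exists w0; apply: UG.
  split.
    exists z0 => -[w [Uw h]]; apply: (nw w Uw).
    have := le_p h; rewrite pz0 Hpr ?leBx // lex0 => /eqP.
    by move=> h2; have := leBLR (p w) e \bot; rewrite h2 le0x joinx0 => <-.
  split.
    move=> a b [w1 [U1 h1]] [w2 [U2 h2]].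
    have [c [Uc [c1 c2]]] := uf_dir uU U1 U2.
    exists (res c (p c `\` e)); split; first by exists c; split=> //; apply: le_refl.
    by split; [apply: le_trans h1; apply: rem_dir | apply: le_trans h2; apply: rem_dir].
  move=> a b [w [Uw h]] ab; exists w; split=> //; exact: le_trans h ab.
have [_ mx] := uU.
apply: (mx G fG UG); exists w0; split=> //; exact: le_refl.
Qed.


Lemma ultra_exists (I : B -> Prop) (S : X -> Prop) :
  I \bot -> (forall f g, f <= g -> I g -> I f) -> (forall f g, I f -> I g -> I (f `|` g)) ->
  (exists s, S s) ->
  (forall s1 s2, S s1 -> S s2 -> exists s3, S s3 /\ le s3 s1 /\ le s3 s2) ->
  (forall s, S s -> ~ I (p s)) ->
  exists M, uf M /\ (forall s, S s -> M s) /\ (forall z, M z -> ~ I (p z)).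
Proof.
move=> I0 Idown Ijoin [s0 Ss0] Sdir Savoid.
pose P := fun A : X -> Prop =>
  (forall a b, A a -> A b -> exists c, A c /\ le c a /\ le c b) /\
  (forall a b, A a -> le a b -> A b) /\ (forall z, A z -> ~ I (p z)) /\
  ((exists a, A a) -> forall s, S s -> A s).
have [M [[Mdir [Mup [Mav Mseed]]] Mmax]] : exists A, P A /\ forall B, P B -> (forall x, A x -> B x) -> forall x, B x -> A x.
  apply: zornP => F FP Ftot; split.
    move=> a b [A [FA Aa]] [A' [FA' A'b]].
    have [h|h] := Ftot A A' FA FA'.
      have [c [Ac [ca cb]]] := (FP _ FA').1 a b (h a Aa) A'b.
      by exists c; split=> //; exists A'.
    have [c [Ac [ca cb]]] := (FP _ FA).1 a b Aa (h b A'b).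
    by exists c; split=> //; exists A.
  split; first by move=> a b [A [FA Aa]] ab; exists A; split=> //; apply: (FP _ FA).2.1 Aa ab.
  split; first by move=> z [A [FA Az]]; apply: (FP _ FA).2.2.1 Az.
  move=> [a [A [FA Aa]]] s Ss; exists A; split=> //.
  by apply: (FP _ FA).2.2.2 => //; exists a.
pose Sup := fun z => exists s, S s /\ le s z.
have PSup : P Sup.
  split.
    move=> a b [s1 [S1 h1]] [s2 [S2 h2]].
    have [s3 [S3 [h31 h32]]] := Sdir _ _ S1 S2.
    exists s3; split; first by exists s3; split=> //; apply: le_refl.
    by split; [apply: le_trans h31 h1 | apply: le_trans h32 h2].
  split; first by move=> a b [s [Ss h]] ab; exists s; split=> //; apply: le_trans h ab.
  split; last by move=> _ s Ss; exists s; split=> //; apply: le_refl.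
  move=> z [s [Ss h]] Iz; apply: (Savoid s Ss); apply: Idown Iz; exact: le_p.
have MS : forall s, S s -> M s.
  apply: Mseed; apply: contrapT => nM.
  apply nM; exists s0; apply: (Mmax Sup PSup) => [x Mx|]; first by case: nM; exists x.
  by exists s0; split=> //; apply: le_refl.
have fM : is_filterX p res M.
  split; first by exists s0; apply: MS.
  split; first by exists z0 => Mz; apply: (Mav z0 Mz); rewrite pz0.
  by split.
exists M; split; last by split.
split => // N fN MN.
apply: (Mmax) => //.
have [Nne [Nprop [Ndir Nup]]] := fN.
split=> //; split=> //; split; last by move=> _ s Ss; apply: MN; apply: MS.
move=> n Nn In.
pose a := p n.
pose M' := fun y => exists w, M w /\ le (res w (p w `\` a)) y.
have PM' : P M'.
  split.
    move=> a1 b1 [w1 [U1 h1]] [w2 [U2 h2]].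
    have [c [Uc [c1 c2]]] := Mdir _ _ U1 U2.
    exists (res c (p c `\` a)); split; first by exists c; split=> //; apply: le_refl.
    by split; [apply: le_trans h1; apply: rem_dir | apply: le_trans h2; apply: rem_dir].
  split; first by move=> a1 b1 [w [Uw h]] ab; exists w; split=> //; exact: le_trans h ab.
  split.
    move=> z [w [Mw h]] Iz; apply: (Mav w Mw).
    have Ir : I (p w `\` a).
      apply: Idown Iz; have := le_p h; rewrite Hpr //; exact: leBx.
    rewrite -(joinIB a (p w)); apply: Ijoin => //.
    by apply: Idown In; apply: leIr.
  move=> _ s Ss; exists s; split; first exact: MS.
  by apply: res_le; apply: leBx.
have M'M : forall x, M' x -> M x.
  apply: (Mmax) => // x Mx; exists x; split=> //; apply: res_le; exact: leBx.
have Mr : M (res s0 (p s0 `\` a)).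
  by apply: M'M; exists s0; split; [apply: MS | apply: le_refl].
have [c [Nc [cn cr]]] := Ndir _ _ Nn (MN _ Mr).
apply: (filter_noz0 fN); rewrite -(p_le0 (z:=c)) //.
have := le_p cr; rewrite Hpr ?leBx //; apply: disj_bot; exact: le_p cn.
Qed.


Lemma open_uf U : dual_open p res U -> forall K, U K -> uf K.
Proof.
elim=> [a K [] | K | U1 V1 _ IH1 _ _ K [h _] | I F _ IH K [i h] | U1 V1 _ IH e K]//.
- exact: IH1.
- exact: IH h.
- by move/e; apply: IH.
Qed.

Lemma open_basic U : dual_open p res U -> forall K, U K ->
  exists a, K a /\ forall K', uf K' -> K' a -> U K'.
Proof.
elim=> [a K [_ Ka] | K uK | U1 V1 o1 IH1 o2 IH2 K [h1 h2] | I F _ IH K [i h] | U1 V1 _ IH e K].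
- by exists a; split=> // K' ? ?; split.
- have [a Ka] := uf_ne uK; by exists a; split.
- have [a1 [Ka1 H1]] := IH1 K h1; have [a2 [Ka2 H2]] := IH2 K h2.
  have [c [Kc [c1 c2]]] := uf_dir (open_uf o1 h1) Ka1 Ka2.
  exists c; split=> // K' uK' K'c; split; [apply: H1 | apply: H2] => //;
    apply: uf_up uK' K'c _; assumption.
- have [a [Ka Ha]] := IH i K h; exists a; split=> // K' u1 u2; exists i; exact: Ha.
- move/e => h; have [a [Ka Ha]] := IH K h; exists a; split=> // K' u1 u2.
  by apply/e; apply: Ha.
Qed.

Lemma sep (Hm : has_binary_meets p res) G H a : uf G -> uf H -> G a -> ~ H a ->
  exists b, H b /\ forall K, uf K -> K a -> K b -> False.
Proof.
move=> uG uH Ga nHa.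
have [b0 Hb0] := uf_ne uH.
have [m [[ma mb0] mgr]] := Hm a b0.
have [[w [Hw pw]] | nw] := pselect (exists w, H w /\ p w <= p m).
  have [c [Hc [cw cb0]]] := uf_dir uH Hw Hb0.
  have cm : le c m.
    apply: le_common cb0 mb0 _.
    exact: Order.POrderTheory.le_trans (le_p cw) pw.
  by case: nHa; apply: uf_up uH (uf_up uH Hc cm) ma.
have nw' : forall w, H w -> ~ p w <= p m by move=> w Hw pw; apply: nw; exists w.
have Hb := ultra_split uH nw' Hb0.
exists (res b0 (p b0 `\` p m)); split=> // K uK Ka Kb.
have [c [Kc [ca cb]]] := uf_dir uK Ka Kb.
have cb0 : le c b0 by apply: le_trans cb _; apply: res_le; apply: leBx.
have cm : le c m by apply: mgr; split.
apply: (uf_bot uK Kc); apply: (@disj_bot _ (p m) (p b0) (le_p cm)).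

by have := le_p cb; rewrite Hpr ?leBx // => ->.
Qed.

Lemma dir1 : has_binary_meets p res -> dual_hausdorff p res.
Proof.
move=> Hm G H uG uH nGH.
have [x hx] : exists x, ~ (G x <-> H x).
  by apply: contrapT => h; apply: nGH => x; apply: contrapT => h2; apply: h; exists x.
have [Gx|nGx] := pselect (G x).
  have nHx : ~ H x by move=> Hx; apply: hx.
  have [b [Hb hb]] := sep Hm uG uH Gx nHx.
  exists (fun K => uf K /\ K x), (fun K => uf K /\ K b).
  split; first exact: do_basic.
  split; first exact: do_basic.
  by do 2 split => //; move=> K [[uK Kx] [_ Kb]]; apply: hb Kx Kb.
have Hx : H x by apply: contrapT => nHx; apply: hx; split.
have [b [Gb hb]] := sep Hm uH uG Hx nGx.
exists (fun K => uf K /\ K b), (fun K => uf K /\ K x).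
split; first exact: do_basic.
split; first exact: do_basic.
by do 2 split => //; move=> K [[uK Kb] [_ Kx]]; apply: hb Kx Kb.
Qed.


Lemma dir2 : dual_hausdorff p res -> has_binary_meets p res.
Proof.
move=> Hh x y.
pose c := p x `&` p y.
have cx : c <= p x by apply: leIl.
have cy : c <= p y by apply: leIr.
pose D := fun e => e <= c /\ res x e = res y e.
have [[e [De emax]] | nomax] := pselect (exists e, D e /\ forall e', D e' -> e' <= e).
  have ex : e <= p x by exact: Order.POrderTheory.le_trans De.1 cx.
  have ey : e <= p y by exact: Order.POrderTheory.le_trans De.1 cy.
  exists (res x e); split.
    by split; [apply: res_le | rewrite De.2; apply: res_le].
  move=> z [zx zy].
  have Dz : D (p z).
    split; first by rewrite lexI (le_p zx) (le_p zy).
    by rewrite -(proj2 zx) -(proj2 zy).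
  exact: le_res zx (emax _ Dz) ex.
exfalso.
have Dbot : D \bot.
  split; first exact: le0x.
  have hx0 : res x \bot = z0 by apply: Hzero; rewrite Hpr // le0x.
  have hy0 : res y \bot = z0 by apply: Hzero; rewrite Hpr // le0x.
  by rewrite hx0 hy0.
have Djoin : forall e1 e2, D e1 -> D e2 -> D (e1 `|` e2).
  move=> e1 e2 [e1c d1] [e2c d2].
  have e12c : e1 `|` e2 <= c by rewrite leUx e1c e2c.
  have e1x : e1 <= p x by exact: Order.POrderTheory.le_trans e1c cx.
  have e2x : e2 <= p x by exact: Order.POrderTheory.le_trans e2c cx.
  have e1y : e1 <= p y by exact: Order.POrderTheory.le_trans e1c cy.
  have e2y : e2 <= p y by exact: Order.POrderTheory.le_trans e2c cy.
  have e12x : e1 `|` e2 <= p x by exact: Order.POrderTheory.le_trans e12c cx.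
  have e12y : e1 `|` e2 <= p y by exact: Order.POrderTheory.le_trans e12c cy.
  split=> //.
  have [j [j1 [j2 jmin]]] : exists j, is_joinX p res (res x e1) (res x e2) j.
    have eix : e1 `&` e2 <= p x by exact: Order.POrderTheory.le_trans (leIl _ _) e1x.
    apply: Hjoin; exists (res x (e1 `&` e2)); split; last by rewrite !Hpr.
    split; first by split; [apply: res_mono (leIl _ _) e1x | apply: res_mono (leIr _ _) e2x].
    move=> z [z1 z2].
    have zx : le z x by apply: le_trans z1 _; apply: res_le.
    apply: le_res zx _ _; last by exact: Order.POrderTheory.le_trans (leIl _ _) e1x.
    have := le_p z1; have := le_p z2; rewrite !Hpr // lexI => -> -> //.
  have jx : le j (res x (e1 `|` e2)).
    by apply: jmin; [apply: res_mono (leUl _ _) e12x | apply: res_mono (leUr _ _) e12x].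
  have jy : le j (res y (e1 `|` e2)).
    by apply: jmin; [rewrite d1; apply: res_mono (leUl _ _) e12y | rewrite d2; apply: res_mono (leUr _ _) e12y].
  have pj : p j = e1 `|` e2.
    apply/eqP; rewrite eq_le; apply/andP; split.
      by have := le_p jx; rewrite Hpr.
    have := le_p j1; have := le_p j2; rewrite !Hpr // => h2 h1; by rewrite leUx h1 h2.
  have ejx : j = res x (e1 `|` e2).
    by rewrite {1}(proj2 jx) pj Hcomp.
  have ejy : j = res y (e1 `|` e2).
    by rewrite {1}(proj2 jy) pj Hcomp.
  by rewrite -ejx -ejy.
pose Ann := fun f => forall e, D e -> f `&` e = \bot.
have Amax : forall e, D e -> Ann (c `\` e) -> False.
  move=> e De Ae; apply: nomax; exists e; split=> // e' De'.
  have h : e' `\` e <= \bot.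
    rewrite -(Ae e' De') lexI leBx andbT; apply: leBl; exact: De'.1.
  by move: h; rewrite leBLR joinx0.
have A0 : Ann \bot by move=> e _; rewrite meet0x.
have Adown : forall f g, f <= g -> Ann g -> Ann f.
  move=> f g fg Ag e De; apply/eqP; rewrite -lex0 -(Ag e De); exact: leI2.
have Ajoin : forall f g, Ann f -> Ann g -> Ann (f `|` g).
  by move=> f g Af Ag e De; rewrite meetUl Af // Ag // joinxx.
pose Sx := fun z => exists e, D e /\ z = res x (c `\` e).
have cex : forall e, c `\` e <= p x.
  by move=> e; exact: Order.POrderTheory.le_trans (leBx _ _) cx.
have Sx1 : exists s, Sx s by exists (res x (c `\` \bot)), \bot.
have Sx2 : forall s1 s2, Sx s1 -> Sx s2 -> exists s3, Sx s3 /\ le s3 s1 /\ le s3 s2.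
  move=> s1 s2 [e1 [De1 ->]] [e2 [De2 ->]].
  exists (res x (c `\` (e1 `|` e2))); split; first by exists (e1 `|` e2); split=> //; apply: Djoin.
  by split; apply: res_mono (cex _); apply: leBr; [apply: leUl | apply: leUr].
have Sx3 : forall s, Sx s -> ~ Ann (p s).
  move=> s [e [De ->]]; rewrite Hpr //; exact: Amax.
have [G [uG [SG GA]]] := @ultra_exists Ann Sx A0 Adown Ajoin Sx1 Sx2 Sx3.
pose x' := res x c.
have px' : p x' = c by rewrite Hpr.
have Gx' : G x'.
  apply: uf_up uG (SG (res x (c `\` \bot)) _) _; first by exists \bot; split.
  by rewrite /x'; apply: res_mono (leBx _ _) cx.
have x'x : le x' x by apply: res_le.
pose Sy := fun z => exists g, G g /\ le g x' /\ z = res y (p g).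
pose I0 := fun f : B => f = \bot.
have I00 : I0 \bot by [].
have I0down : forall f g, f <= g -> I0 g -> I0 f.
  by move=> f g fg; rewrite /I0 => gb; apply/eqP; rewrite -lex0 -gb.
have I0join : forall f g, I0 f -> I0 g -> I0 (f `|` g).
  by move=> f g; rewrite /I0 => -> ->; rewrite joinxx.
have gy : forall g, le g x' -> p g <= p y.
  by move=> g gx; have := le_p gx; rewrite px' => h; exact: Order.POrderTheory.le_trans h cy.
have Sy1 : exists s, Sy s by exists (res y (p x')), x'; split=> //; split=> //; apply: le_refl.
have Sy2 : forall s1 s2, Sy s1 -> Sy s2 -> exists s3, Sy s3 /\ le s3 s1 /\ le s3 s2.
  move=> s1 s2 [g1 [G1 [g1x ->]]] [g2 [G2 [g2x ->]]].
  have [g3 [G3 [g31 g32]]] := uf_dir uG G1 G2.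
  have g3x : le g3 x' by apply: le_trans g31 g1x.
  exists (res y (p g3)); split; first by exists g3.
  by split; apply: res_mono; rewrite ?gy //; apply: le_p.
have Sy3 : forall s, Sy s -> ~ I0 (p s).
  move=> s [g [Gg [gx ->]]]; rewrite /I0 Hpr ?gy // => e0.
  by apply: (uf_bot uG Gg); rewrite e0.
have [H [uH [SH _]]] := @ultra_exists I0 Sy I00 I0down I0join Sy1 Sy2 Sy3.
pose y' := res y c.
have Hy' : H y' by apply: SH; exists x'; split=> //; split; [apply: le_refl | rewrite px'].
have [U [V [oU [oV [UG [VH disj]]]]]] : exists U V, dual_open p res U /\ dual_open p res V /\ U G /\ V H /\
              forall K, ~ (U K /\ V K).
  apply: Hh => // eq.
  have Gy' : G y' by apply/eq.
  have [h [Gh [hx hy]]] := uf_dir uG Gx' Gy'.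
  have phc : p h <= c by have := le_p hx; rewrite px'.
  have Dh : D (p h).
    split=> //.
    rewrite -(proj2 (le_trans hx x'x)) -(proj2 (le_trans hy (res_le cy))) //.
  have Gs := SG (res x (c `\` p h)) (ex_intro _ (p h) (conj Dh erefl)).
  have [k [Gk [kh ks]]] := uf_dir uG Gh Gs.
  apply: (uf_bot uG Gk); apply: (@disj_bot _ (p h) c (le_p kh)).
  by have := le_p ks; rewrite Hpr ?cex.
have [a [Ga Ha]] := open_basic oU UG.
have [b [Hb Hb']] := open_basic oV VH.
have [h [Hh1 [hb hy']]] := uf_dir uH Hb Hy'.
have hyy : le h y by apply: le_trans hy' (res_le cy).
have [[w [Gw pw]] | nw] := pselect (exists w, G w /\ p w <= p h); last first.
  have nw' : forall w, G w -> ~ p w <= p h by move=> w Gw pw; apply: nw; exists w.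
  have Gr := ultra_split uG nw' Gx'.
  have Hr : H (res y (c `\` p h)).
    apply: SH; exists (res x' (p x' `\` p h)); split=> //; split.
      by apply: res_le; apply: leBx.
    by rewrite Hpr ?leBx // px'.
  have [k [Hk [kh ks]]] := uf_dir uH Hh1 Hr.
  apply: (uf_bot uH Hk); apply: (@disj_bot _ (p h) c (le_p kh)).
  have cphy : c `\` p h <= p y by exact: Order.POrderTheory.le_trans (leBx _ _) cy.
  by have := le_p ks; rewrite Hpr.
have [g1 [Gg1 [g1w g1a]]] := uf_dir uG Gw Ga.
have [g [Gg [gg1 gx']]] := uf_dir uG Gg1 Gx'.
have gw := le_trans gg1 g1w; have ga := le_trans gg1 g1a.
have gx := le_trans gx' x'x.
have pgh : p g <= p h by exact: Order.POrderTheory.le_trans (le_p gw) pw.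
have [e [De ne]] : exists e, D e /\ p g `&` e <> \bot.
  apply: contrapT => nex; apply: (GA g Gg) => e De; apply: contrapT => ne.
  by apply: nex; exists e.
pose f := p g `&` e.
have fe : f <= e by apply: leIr.
have fc : f <= c by exact: Order.POrderTheory.le_trans fe De.1.
have fx : f <= p x by exact: Order.POrderTheory.le_trans fc cx.
have fy : f <= p y by exact: Order.POrderTheory.le_trans fc cy.
have ec : e <= c := De.1.
have exy : res x f = res y f.
  rewrite -(@Hcomp x e f) // ?De.2 ?Hcomp //; exact: Order.POrderTheory.le_trans ec _.
have K1 : exists s, (fun z => z = res x f) s by exists (res x f).
have K2 : forall s1 s2, s1 = res x f -> s2 = res x f -> exists s3, s3 = res x f /\ le s3 s1 /\ le s3 s2.
  by move=> s1 s2 -> ->; exists (res x f); split=> //; split; apply: le_refl.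
have K3 : forall s, s = res x f -> ~ I0 (p s) by move=> s ->; rewrite /I0 Hpr.
have [K [uK [SK _]]] := @ultra_exists I0 (fun z => z = res x f) I00 I0down I0join K1 K2 K3.
have Kw := SK _ erefl.
have wg : le (res x f) g.
  by apply: le_common (res_le fx) gx _; rewrite Hpr //; apply: leIl.
have wh : le (res y f) h.
  apply: le_common (res_le fy) hyy _; rewrite Hpr //.
  by apply: Order.POrderTheory.le_trans pgh; apply: leIl.
apply: (disj K); split.
  by apply: Ha => //; apply: uf_up uK Kw _; apply: le_trans wg ga.
by apply: Hb' => //; apply: uf_up uK Kw _; rewrite exy; apply: le_trans wh hb.
Qed.

End BS.

Theorem proposition3p15 (d : Order.disp_t) (B : cbDistrLatticeType d) (X : Type)
  (p : X -> B) (res : X -> B -> X) :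
  boolean_set p res ->
  (has_binary_meets p res <-> dual_hausdorff p res).
Proof.
move=> [Hpr [Hid [Hcomp [Hfib [z0 [Hz0 [Hjoin Hzero]]]]]]].
split.
  by apply: (@dir1 d B X p res); eassumption.
by apply: (@dir2 d B X p res); eassumption.
Qed.
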